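(* Let $n>3$ be real, let $m=1/2$, and let $K=K(1/2)=\int_0^{\pi/2}\bigl(1-\tfrac12\sin^2\theta\bigr)^{-1/2}\,d\theta$. Define $g:\mathbb R\to\mathbb R$ by $g(x)=\operatorname{cn}(x,1/2)^n$ for $x\in[-K,K]$ and $g(x)=0$ otherwise. Then $g$ is of class $C^3$ on $\mathbb R$ and satisfies $$n\,g'''(x)\,g(x)^2-3n\,g''(x)\,g'(x)\,g(x)+2\left(n-\tfrac1n\right)g'(x)^3=0\qquad\text{for all }x\in\mathbb R.$$ Consequently, for any constants $\alpha\neq 0,\beta,\gamma,\delta\in\mathbb R$, the function $Y(x)=\gamma\int_{-\infty}^{x}g(\alpha t+\beta)\,dt+\delta$ is a $C^4$ solution on $\mathbb R$ of $Y''''(Y')^2-3Y'''Y''Y'+2(1-n^{-2})(Y'')^3=0$.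
   Context: $\operatorname{sn}(x,m),\operatorname{cn}(x,m),\operatorname{dn}(x,m)$ denote the Jacobian elliptic functions with parameter $m\in[0,1)$; they satisfy $\operatorname{sn}'=\operatorname{cn}\operatorname{dn}$, $\operatorname{cn}'=-\operatorname{sn}\operatorname{dn}$, $\operatorname{dn}'=-m\operatorname{sn}\operatorname{cn}$, $\operatorname{sn}^2+\operatorname{cn}^2=1$, $\operatorname{dn}^2+m\operatorname{sn}^2=1$, with $\operatorname{cn}(0,m)=1$, $\operatorname{sn}(0,m)=0$. $K(m)$ is the complete elliptic integral of the first kind; $\operatorname{cn}(x,m)>0$ for $|x|<K(m)$ and $\operatorname{cn}(\pm K(m),m)=0$. *)

(* Defs.v *)
From Stdlib Require Import Reals Lra ClassicalEpsilon.
From Coquelicot Require Import Coquelicot.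
Open Scope R_scope.

Definition ellF (m phi : R) : R :=
  RInt (fun t => / sqrt (1 - m * (sin t) ^ 2)) 0 phi.

Definition ellK (m : R) : R := ellF m (PI / 2).

(* Jacobi amplitude am(x | m): the (unique, for 0 <= m < 1) phi with
   F(phi | m) = x; chosen by Hilbert's epsilon. *)
Definition jam (m x : R) : R :=
  epsilon (inhabits 0) (fun phi => ellF m phi = x).

Definition jsn (m x : R) : R := sin (jam m x).
Definition jcn (m x : R) : R := cos (jam m x).
Definition jdn (m x : R) : R := sqrt (1 - m * (jsn m x) ^ 2).

Definition rpow (x a : R) : R := if Rlt_dec 0 x then Rpower x a else 0.

Definition Ck (k : nat) (f : R -> R) : Prop :=
  (forall j, (j <= k)%nat -> forall x, ex_derive_n f j x) /\
  (forall x, continuous (Derive_n f k) x).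

Definition gfun (n : R) (x : R) : R :=
  if Rle_dec (Rabs x) (ellK (1/2)) then rpow (jcn (1/2) x) n else 0.

(* Main.v *)
Require Import Defs.
From Stdlib Require Import Reals Lra Lia ClassicalEpsilon FunctionalExtensionality.
From Coquelicot Require Import Coquelicot.
Open Scope R_scope.

Definition Dh (t : R) : R := sqrt (1 - 1/2 * sin t ^ 2).
Definition hh (t : R) : R := / Dh t.
Definition FF (p : R) : R := ellF (1/2) p.

Lemma rad_pos t : 0 < 1 - 1/2 * sin t ^ 2.
Proof. pose proof (SIN_bound t). nra. Qed.

Lemma Dh_pos t : 0 < Dh t.
Proof. unfold Dh. apply sqrt_lt_R0, rad_pos. Qed.

Lemma Dh_le1 t : Dh t <= 1.
Proof. unfold Dh. apply Rle_trans with (sqrt 1); [|rewrite sqrt_1; lra]. apply sqrt_le_1_alt.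
  pose proof (pow2_ge_0 (sin t)). lra. Qed.

Lemma hh_ge1 t : 1 <= hh t.
Proof. unfold hh. pose proof (Dh_pos t). pose proof (Dh_le1 t).
  rewrite <- Rinv_1. apply Rinv_le_contravar; lra. Qed.

Lemma hh_pos t : 0 < hh t.
Proof. pose proof (hh_ge1 t); lra. Qed.

Lemma Dh_derive t : is_derive Dh t (- (sin t * cos t) / (2 * Dh t)).
Proof.
  unfold Dh. auto_derive.
  - apply rad_pos.
  - replace (1 + - (1/2 * (sin t * (sin t * 1)))) with (1 - 1/2*sin t^2) by ring.
    field. pose proof (Dh_pos t). unfold Dh in H. lra.
Qed.

Lemma cont_of_derive (f : R -> R) x l : is_derive f x l -> continuous f x.
Proof. intros H. apply (ex_derive_continuous (K:=R_AbsRing) (V:=R_NormedModule)). exists l; exact H. Qed.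

Lemma Dh_cont t : continuous Dh t.
Proof. eapply cont_of_derive. apply Dh_derive. Qed.

Lemma hh_cont t : continuous hh t.
Proof. apply (ex_derive_continuous (K:=R_AbsRing) (V:=R_NormedModule)). unfold hh, Dh. auto_derive.
  assert (E: 1 + - (1/2 * (sin t * (sin t * 1))) = 1 - 1/2*sin t^2) by ring. rewrite E.
  pose proof (rad_pos t). pose proof (Dh_pos t). unfold Dh in *. repeat split; lra. Qed.

Lemma FF_eq p : FF p = RInt hh 0 p.
Proof. reflexivity. Qed.

Lemma hh_exRInt a b : ex_RInt hh a b.
Proof. apply (ex_RInt_continuous (V:=R_CompleteNormedModule)). intros; apply hh_cont. Qed.

Lemma FF_derive p : is_derive FF p (hh p).
Proof.
  apply is_derive_RInt with (a := 0).
  - exists (mkposreal 1 Rlt_0_1). intros y _. apply (RInt_correct (V:=R_CompleteNormedModule)), hh_exRInt.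
  - apply hh_cont.
Qed.

Lemma FF_cont p : continuity_pt FF p.
Proof. apply continuity_pt_filterlim. eapply cont_of_derive; apply FF_derive. Qed.

Lemma FF_MVT a b : exists c, Rmin a b <= c <= Rmax a b /\ FF b - FF a = hh c * (b - a).
Proof. apply MVT_gen. intros; apply FF_derive. intros; apply FF_cont. Qed.

Lemma FF_lip a b : a <= b -> b - a <= FF b - FF a.
Proof. intros H. destruct (FF_MVT a b) as [c [_ Hc]]. rewrite Hc.
  pose proof (hh_ge1 c). nra. Qed.

Lemma FF_lt a b : a < b -> FF a < FF b.
Proof. intros H. pose proof (FF_lip a b). lra. Qed.

Lemma FF_le a b : a <= b -> FF a <= FF b.
Proof. intros H. pose proof (FF_lip a b). lra. Qed.

Lemma FF_0 : FF 0 = 0.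
Proof. unfold FF, ellF. apply (RInt_point (V:=R_CompleteNormedModule)). Qed.

Lemma FF_inj a b : FF a = FF b -> a = b.
Proof. intros H. destruct (Rtotal_order a b) as [h|[h|h]]; auto.
  apply FF_lt in h; lra. apply FF_lt in h; lra. Qed.

Lemma FF_surj x : exists p, FF p = x.
Proof.
  assert (H1 := FF_lip 0 (Rabs x) (Rabs_pos x)).
  assert (H2 := FF_lip (- Rabs x) 0 ltac:(pose proof (Rabs_pos x); lra)).
  rewrite FF_0 in H1, H2.
  destruct (IVT_cor (fun p => FF p - x) (- Rabs x) (Rabs x)) as [z [_ Hz]].
  - intro p. apply continuity_pt_minus. apply FF_cont. apply continuity_pt_const. intros u v; auto.
  - pose proof (Rabs_pos x); lra.
  - pose proof (Rle_abs x). pose proof (Rabs_maj2 x).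
    assert (FF (- Rabs x) - x <= 0) by lra. assert (0 <= FF (Rabs x) - x) by lra. nra.
  - exists z. lra.
Qed.

Definition jm (x : R) : R := jam (1/2) x.

Lemma jm_spec x : FF (jm x) = x.
Proof. unfold jm, jam. destruct (FF_surj x) as [p Hp].
  apply (epsilon_spec (inhabits 0) (fun phi => ellF (1/2) phi = x)). exists p. exact Hp. Qed.

Lemma jm_unique x p : FF p = x -> jm x = p.
Proof. intros H. apply FF_inj. rewrite jm_spec. auto. Qed.

Lemma jm_lip x y : Rabs (jm y - jm x) <= Rabs (y - x).
Proof.
  destruct (Rle_dec (jm x) (jm y)).
  - pose proof (FF_lip _ _ r). rewrite !jm_spec in H.
    rewrite Rabs_right by lra. rewrite Rabs_right by lra. lra.
  - pose proof (FF_lip (jm y) (jm x) ltac:(lra)). rewrite !jm_spec in H.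
    rewrite Rabs_left by lra. rewrite Rabs_left1 by lra. lra.
Qed.

Lemma jm_lt x y : x < y -> jm x < jm y.
Proof. intros H. destruct (Rlt_le_dec (jm x) (jm y)); auto.
  apply FF_le in r. rewrite !jm_spec in r. lra. Qed.

Lemma jm_cont x : continuity_pt jm x.
Proof.
  apply continuity_pt_locally. intros eps. exists eps. intros y Hy.
  eapply Rle_lt_trans. apply jm_lip. exact Hy.
Qed.

Lemma jm_derive x : is_derive jm x (Dh (jm x)).
Proof.
  apply is_derive_Reals. intros eps Heps.
  assert (Hc := Dh_cont (jm x)). apply continuity_pt_filterlim in Hc.
  destruct (proj1 (continuity_pt_locally _ _) Hc (mkposreal eps Heps)) as [d Hd].
  exists d. intros h Hh0 Hh.
  set (q := jm (x + h)). set (p := jm x).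
  destruct (FF_MVT p q) as [c [Hc1 Hc2]].
  unfold q, p in Hc2. rewrite !jm_spec in Hc2. fold p q in Hc2.
  assert (Hqp : q - p <> 0). { intro E. rewrite E in Hc2. lra. }
  assert (E : (q - p) / h = Dh c).
  { unfold hh in Hc2. pose proof (Dh_pos c).
    replace h with ((q - p) / Dh c) by (unfold Rdiv; rewrite Rmult_comm; lra).
    field. lra. }
  rewrite E. apply Hd. change (Rabs (c - p) < d).
  assert (Hl := jm_lip x (x + h)). fold p q in Hl.
  replace (x + h - x) with h in Hl by ring.
  apply Rle_lt_trans with (Rabs h); auto.
  apply Rle_trans with (Rabs (q - p)); auto.
  unfold Rmin, Rmax in Hc1. destruct (Rle_dec p q);
  unfold Rabs; destruct (Rcase_abs (c - p)); destruct (Rcase_abs (q - p)); lra.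
Qed.

Lemma is_derive_comp_R (f g : R -> R) x df dg :
  is_derive f (g x) df -> is_derive g x dg -> is_derive (fun y => f (g y)) x (dg * df).
Proof. intros H1 H2. apply (is_derive_comp f g x df dg H1 H2). Qed.

Lemma hh_even t : hh (- t) = hh t.
Proof. unfold hh, Dh. rewrite sin_neg. f_equal. f_equal. ring. Qed.

Lemma FF_odd p : FF (- p) = - FF p.
Proof.
  set (Phi := fun q => FF q + FF (- q)).
  assert (HD : forall q, is_derive Phi q 0).
  { intros q. unfold Phi.
    replace 0 with (hh q + (-1) * hh (- q)) by (rewrite hh_even; ring).
    apply (is_derive_plus (K:=R_AbsRing) (V:=R_NormedModule)). apply FF_derive.
    apply (is_derive_comp_R FF (fun q => - q)). apply FF_derive.
    auto_derive; auto; ring. }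
  destruct (MVT_gen Phi 0 p (fun _ => 0)) as [c [_ Hc]].
  - intros; apply HD.
  - intros; apply continuity_pt_filterlim. eapply cont_of_derive; apply HD.
  - unfold Phi in Hc. rewrite Ropp_0, FF_0 in Hc. lra.
Qed.

Definition Kp := ellK (1/2).

Lemma Kp_eq : Kp = FF (PI/2).
Proof. reflexivity. Qed.

Lemma Kp_pos : 0 < Kp.
Proof. rewrite Kp_eq. pose proof (FF_lip 0 (PI/2)). rewrite FF_0 in H.
  pose proof PI2_RGT_0. lra. Qed.

Lemma jm_K : jm Kp = PI/2.
Proof. apply jm_unique. reflexivity. Qed.

Lemma jm_mK : jm (- Kp) = - (PI/2).
Proof. apply jm_unique. rewrite FF_odd. reflexivity. Qed.

Lemma jm_in x : - Kp < x < Kp -> - (PI/2) < jm x < PI/2.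
Proof. intros [H1 H2]. rewrite <- jm_mK, <- jm_K. split; apply jm_lt; auto. Qed.

Lemma rpow_pos c a : 0 < c -> rpow c a = exp (a * ln c).
Proof. intros H. unfold rpow. destruct (Rlt_dec 0 c); [reflexivity|contradiction]. Qed.

Lemma rpow_npos c a : c <= 0 -> rpow c a = 0.
Proof. intros H. unfold rpow. destruct (Rlt_dec 0 c); [lra|reflexivity]. Qed.

Lemma loc_int a b x : a < x < b -> locally x (fun y => a < y < b).
Proof. intros H. apply (open_and _ _ (open_gt a) (open_lt b)). exact H. Qed.

Lemma expl c a b k : 0 < c -> b = a + INR k -> exp (b * ln c) = exp (a * ln c) * c ^ k.
Proof. intros Hc ->. rewrite Rmult_plus_distr_r, exp_plus. f_equal.
  rewrite <- (Rpower_pow k c Hc). reflexivity. Qed.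

Lemma rpow_cont a c0 : 0 < a -> continuity_pt (fun c => rpow c a) c0.
Proof.
  intros Ha. destruct (Rtotal_order c0 0) as [Hc|[Hc|Hc]].
  - apply continuity_pt_filterlim.
    apply (continuous_ext_loc (fun c => rpow c a) (fun _ => 0)).
    + destruct (loc_int (c0 - 1) 0 c0 ltac:(lra)) as [e He]. exists e. intros y Hy.
      specialize (He y Hy). rewrite rpow_npos; lra.
    + apply continuous_const.
  - subst c0. apply continuity_pt_locally. intros eps.
    assert (Hd : 0 < exp (ln eps / a)) by apply exp_pos.
    exists (mkposreal _ Hd). intros y Hy. change (Rabs (y - 0) < exp (ln eps / a)) in Hy.
    rewrite (rpow_npos 0) by lra. rewrite Rminus_0_r in Hy |- *.
    destruct (Rle_dec y 0). rewrite rpow_npos by lra. rewrite Rabs_R0. apply cond_pos.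
    rewrite rpow_pos by lra. rewrite Rabs_right by (left; apply exp_pos).
    rewrite Rabs_right in Hy by lra.
    assert (ln y < ln eps / a).
    { rewrite <- (ln_exp (ln eps / a)). apply ln_increasing; lra. }
    rewrite <- (exp_ln eps) by apply cond_pos. apply exp_increasing.
    apply Rmult_lt_compat_l with (r := a) in H; auto.
    replace (a * (ln eps / a)) with (ln eps) in H by (field; lra). lra.
  - apply continuity_pt_filterlim.
    apply (continuous_ext_loc (fun c => rpow c a) (fun c => exp (a * ln c))).
    + destruct (loc_int 0 (c0 + 1) c0 ltac:(lra)) as [e He]. exists e. intros y Hy.
      specialize (He y Hy). rewrite rpow_pos; lra.
    + eapply cont_of_derive. auto_derive. lra. reflexivity.
Qed.

Lemma Dh_sq t : Dh t ^ 2 = 1 - 1/2 * sin t ^ 2.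
Proof. unfold Dh. rewrite pow2_sqrt. auto. left; apply rad_pos. Qed.

Lemma sin_sq t : sin t ^ 2 = 1 - cos t ^ 2.
Proof. pose proof (sin2_cos2 t). unfold Rsqr in H. simpl. lra. Qed.

Definition Pw (a phi : R) : R := rpow (cos phi) a.
Definition AA (n : R) := n * (n - 1) / 2.
Definition BB (n : R) := - (n * (n + 1) / 2).
Definition G0 n phi := Pw n phi.
Definition G1 n phi := - n * Pw (n - 1) phi * sin phi * Dh phi.
Definition G2 n phi := AA n * Pw (n - 2) phi + BB n * Pw (n + 2) phi.
Definition G3 n phi := - (AA n * (n - 2) * Pw (n - 3) phi + BB n * (n + 2) * Pw (n + 1) phi)
                        * sin phi * Dh phi.

Lemma loc_cos phi : - (PI/2) < phi < PI/2 ->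
  locally phi (fun y => 0 < cos y).
Proof. intros H. destruct (loc_int _ _ _ H) as [e He]. exists e. intros y Hy.
  destruct (He y Hy). apply cos_gt_0; auto. Qed.

Lemma G0_der n phi : - (PI/2) < phi < PI/2 -> is_derive (G0 n) phi (G1 n phi / Dh phi).
Proof.
  intros H. assert (Hc := cos_gt_0 _ (proj1 H) (proj2 H)).
  apply (is_derive_ext_loc (fun y => exp (n * ln (cos y)))).
  { destruct (loc_cos _ H) as [e He]. exists e. intros y Hy.
    unfold G0, Pw. rewrite rpow_pos; auto. }
  auto_derive. auto.
  unfold G1, Pw. rewrite rpow_pos by auto.
  rewrite (expl (cos phi) (n - 1) n 1) by (auto; simpl; ring).
  field. split. apply Rgt_not_eq, Dh_pos. lra.
Qed.

Lemma G1_der n phi : - (PI/2) < phi < PI/2 -> is_derive (G1 n) phi (G2 n phi / Dh phi).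
Proof.
  intros H. assert (Hc := cos_gt_0 _ (proj1 H) (proj2 H)).
  apply (is_derive_ext_loc (fun y => - n * exp ((n-1) * ln (cos y)) * sin y * sqrt (1 - 1/2 * sin y ^ 2))).
  { destruct (loc_cos _ H) as [e He]. exists e. intros y Hy.
    unfold G1, Pw, Dh. rewrite rpow_pos; auto. }
  auto_derive. split; auto. split. apply rad_pos. auto.
  unfold G2, Pw. rewrite !rpow_pos by auto.
  rewrite (expl (cos phi) (n - 3) (n - 1) 2) by (auto; simpl; ring).
  rewrite (expl (cos phi) (n - 3) (n - 2) 1) by (auto; simpl; ring).
  rewrite (expl (cos phi) (n - 3) (n + 2) 5) by (auto; simpl; ring).
  replace (1 + - (1 / 2 * (sin phi * (sin phi * 1)))) with (1 - 1/2 * sin phi ^ 2) by ring.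
  fold (Dh phi).
  assert (HD2 := Dh_sq phi). assert (Hs := sin_sq phi). assert (HD := Dh_pos phi).
  set (E := exp ((n - 3) * ln (cos phi))) in *. set (D := Dh phi) in *.
  set (c := cos phi) in *. set (s := sin phi) in *. unfold AA, BB.
  field_simplify_eq; [| lra].
  rewrite HD2. rewrite Hs. field.
Qed.

Lemma G2_der n phi : - (PI/2) < phi < PI/2 -> is_derive (G2 n) phi (G3 n phi / Dh phi).
Proof.
  intros H. assert (Hc := cos_gt_0 _ (proj1 H) (proj2 H)).
  apply (is_derive_ext_loc (fun y => AA n * exp ((n-2) * ln (cos y)) + BB n * exp ((n+2) * ln (cos y)))).
  { destruct (loc_cos _ H) as [e He]. exists e. intros y Hy.
    unfold G2, Pw. rewrite !rpow_pos; auto. }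
  auto_derive. split; auto.
  unfold G3, Pw. rewrite !rpow_pos by auto.
  rewrite (expl (cos phi) (n - 3) (n - 2) 1) by (auto; simpl; ring).
  rewrite (expl (cos phi) (n - 3) (n + 2) 5) by (auto; simpl; ring).
  rewrite (expl (cos phi) (n - 3) (n + 1) 4) by (auto; simpl; ring).
  assert (HD := Dh_pos phi).
  field. lra.
Qed.

Lemma cc_mult (f g : R -> R) x : continuity_pt f x -> continuity_pt g x ->
  continuity_pt (fun y => f y * g y) x.
Proof. intros. exact (continuity_pt_mult f g x H H0). Qed.
Lemma cc_plus (f g : R -> R) x : continuity_pt f x -> continuity_pt g x ->
  continuity_pt (fun y => f y + g y) x.
Proof. intros. exact (continuity_pt_plus f g x H H0). Qed.
Lemma cc_opp (f : R -> R) x : continuity_pt f x -> continuity_pt (fun y => - f y) x.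
Proof. intros. exact (continuity_pt_opp f x H). Qed.
Lemma cc_const (k : R) x : continuity_pt (fun _ => k) x.
Proof. apply continuity_pt_const. intros u v; auto. Qed.
Lemma cc_comp (f g : R -> R) x : continuity_pt f x -> continuity_pt g (f x) ->
  continuity_pt (fun y => g (f y)) x.
Proof. intros. exact (continuity_pt_comp f g x H H0). Qed.

Lemma Pw_cont a x : 0 < a -> continuity_pt (Pw a) x.
Proof. intros Ha. unfold Pw. apply (cc_comp cos (fun c => rpow c a)).
  apply continuity_cos. apply rpow_cont; auto. Qed.

Lemma Dh_cont' x : continuity_pt Dh x.
Proof. apply continuity_pt_filterlim. apply Dh_cont. Qed.

Ltac cc := repeat first [ apply cc_mult | apply cc_plus | apply cc_opp | apply cc_const | apply continuity_sin
  | apply Dh_cont' | (apply Pw_cont; lra) ].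

Lemma G0_cont n x : 3 < n -> continuity_pt (G0 n) x.
Proof. intros. unfold G0. cc. Qed.
Lemma G1_cont n x : 3 < n -> continuity_pt (G1 n) x.
Proof. intros. unfold G1. cc. Qed.
Lemma G2_cont n x : 3 < n -> continuity_pt (G2 n) x.
Proof. intros. unfold G2. cc. Qed.
Lemma G3_cont n x : 3 < n -> continuity_pt (G3 n) x.
Proof. intros. unfold G3. cc. Qed.

Lemma Pw_PI2 a : Pw a (PI/2) = 0.
Proof. unfold Pw. rewrite cos_PI2. apply rpow_npos. lra. Qed.
Lemma Pw_mPI2 a : Pw a (- (PI/2)) = 0.
Proof. unfold Pw. rewrite cos_neg, cos_PI2. apply rpow_npos. lra. Qed.

Lemma G_ends n : G0 n (PI/2) = 0 /\ G1 n (PI/2) = 0 /\ G2 n (PI/2) = 0 /\ G3 n (PI/2) = 0 /\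
  G0 n (-(PI/2)) = 0 /\ G1 n (-(PI/2)) = 0 /\ G2 n (-(PI/2)) = 0 /\ G3 n (-(PI/2)) = 0.
Proof. unfold G0, G1, G2, G3. rewrite !Pw_PI2, !Pw_mPI2. repeat split; ring. Qed.

Definition cut (a b : R) (F : R -> R) (x : R) : R :=
  if Rlt_dec a x then (if Rlt_dec x b then F x else 0) else 0.

Lemma cut_in a b F x : a < x < b -> cut a b F x = F x.
Proof. intros [H1 H2]. unfold cut. destruct (Rlt_dec a x); [|lra]. destruct (Rlt_dec x b); lra. Qed.

Lemma cut_out a b F x : x <= a \/ b <= x -> cut a b F x = 0.
Proof. intros H. unfold cut. destruct (Rlt_dec a x); auto. destruct (Rlt_dec x b); auto. lra. Qed.

Lemma cut_cases a b F x : cut a b F x = F x \/ cut a b F x = 0.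
Proof. unfold cut. destruct (Rlt_dec a x); auto. destruct (Rlt_dec x b); auto. Qed.

Lemma cut_cont a b F : a < b -> (forall x, continuity_pt F x) -> F a = 0 -> F b = 0 ->
  forall x, continuity_pt (cut a b F) x.
Proof.
  intros Hab HF Ha Hb x.
  destruct (Rtotal_order x a) as [Hx|[Hx|Hx]];
  [| | destruct (Rtotal_order x b) as [Hy|[Hy|Hy]]].
  - apply continuity_pt_filterlim.
    apply (continuous_ext_loc (cut a b F) (fun _ => 0)).
    + destruct (loc_int (x - 1) a x ltac:(lra)) as [e He]. exists e. intros y Hyy.
      specialize (He y Hyy). rewrite cut_out; lra.
    + apply continuous_const.
  - subst x. apply continuity_pt_locally. intros eps.
    destruct (proj1 (continuity_pt_locally _ _) (HF a) eps) as [d Hd].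
    exists d. intros y Hyy. specialize (Hd y Hyy). rewrite (cut_out a b F a) by lra.
    rewrite Ha in Hd. destruct (cut_cases a b F y) as [E|E]; rewrite E; auto.
    rewrite Rminus_0_r, Rabs_R0. apply cond_pos.
  - apply continuity_pt_filterlim.
    apply (continuous_ext_loc (cut a b F) F).
    + destruct (loc_int a b x ltac:(lra)) as [e He]. exists e. intros y Hyy.
      specialize (He y Hyy). rewrite cut_in; lra.
    + apply continuity_pt_filterlim. apply HF.
  - subst x. apply continuity_pt_locally. intros eps.
    destruct (proj1 (continuity_pt_locally _ _) (HF b) eps) as [d Hd].
    exists d. intros y Hyy. specialize (Hd y Hyy). rewrite (cut_out a b F b) by lra.
    rewrite Hb in Hd. destruct (cut_cases a b F y) as [E|E]; rewrite E; auto.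
    rewrite Rminus_0_r, Rabs_R0. apply cond_pos.
  - apply continuity_pt_filterlim.
    apply (continuous_ext_loc (cut a b F) (fun _ => 0)).
    + destruct (loc_int b (x + 1) x ltac:(lra)) as [e He]. exists e. intros y Hyy.
      specialize (He y Hyy). rewrite cut_out; lra.
    + apply continuous_const.
Qed.

Lemma is_derive_const0 x : is_derive (fun _ : R => 0) x 0.
Proof. auto_derive; auto. Qed.

Lemma glue a b F F1 : a < b -> (forall x, continuity_pt F x) -> (forall x, continuity_pt F1 x) ->
  F a = 0 -> F b = 0 -> F1 a = 0 -> F1 b = 0 ->
  (forall x, a < x < b -> is_derive F x (F1 x)) ->
  forall x, is_derive (cut a b F) x (cut a b F1 x).
Proof.
  intros Hab HF HF1 Ha Hb H1a H1b HD x.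
  destruct (Rtotal_order x a) as [Hx|[Hx|Hx]];
  [| | destruct (Rtotal_order x b) as [Hy|[Hy|Hy]]].
  - rewrite cut_out by lra.
    apply (is_derive_ext_loc (fun _ => 0)). 2: apply is_derive_const0.
    destruct (loc_int (x - 1) a x ltac:(lra)) as [e He]. exists e. intros y Hyy.
    specialize (He y Hyy). rewrite cut_out; lra.
  - subst x. rewrite cut_out by lra. apply is_derive_Reals. intros eps Heps.
    destruct (proj1 (continuity_pt_locally _ _) (HF1 a) (mkposreal eps Heps)) as [d Hd].
    assert (Hdp : 0 < Rmin d (b - a)) by (apply Rmin_pos; [apply cond_pos|lra]).
    exists (mkposreal _ Hdp). intros h Hh0 Hh. simpl in Hh.
    pose proof (Rmin_l d (b - a)). pose proof (Rmin_r d (b - a)).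
    rewrite (cut_out a b F a) by lra.
    destruct (Rlt_dec 0 h).
    + rewrite Rabs_right in Hh by lra. rewrite cut_in by lra.
      destruct (MVT_gen F a (a + h) F1) as [c [Hc1 Hc2]].
      { intros y Hyy. rewrite Rmin_left, Rmax_right in Hyy by lra. apply HD; lra. }
      { intros; apply HF. }
      rewrite Rmin_left, Rmax_right in Hc1 by lra.
      rewrite Ha in Hc2. replace (a + h - a) with h in Hc2 by ring.
      replace ((F (a + h) - 0) / h - 0) with (F1 c) by (rewrite Rminus_0_r, Hc2; field; auto).
      rewrite <- (Rminus_0_r (F1 c)), <- H1a. apply Hd. change (Rabs (c - a) < d).
      rewrite Rabs_right; lra.
    + rewrite cut_out by lra. replace ((0 - 0) / h - 0) with 0 by (field; auto). rewrite Rabs_R0. auto.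
  - rewrite cut_in by lra.
    apply (is_derive_ext_loc F). 2: apply HD; lra.
    destruct (loc_int a b x ltac:(lra)) as [e He]. exists e. intros y Hyy.
    specialize (He y Hyy). rewrite cut_in; lra.
  - subst x. rewrite cut_out by lra. apply is_derive_Reals. intros eps Heps.
    destruct (proj1 (continuity_pt_locally _ _) (HF1 b) (mkposreal eps Heps)) as [d Hd].
    assert (Hdp : 0 < Rmin d (b - a)) by (apply Rmin_pos; [apply cond_pos|lra]).
    exists (mkposreal _ Hdp). intros h Hh0 Hh. simpl in Hh.
    pose proof (Rmin_l d (b - a)). pose proof (Rmin_r d (b - a)).
    rewrite (cut_out a b F b) by lra.
    destruct (Rlt_dec h 0).
    + rewrite Rabs_left in Hh by lra. rewrite cut_in by lra.
      destruct (MVT_gen F (b + h) b F1) as [c [Hc1 Hc2]].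
      { intros y Hyy. rewrite Rmin_left, Rmax_right in Hyy by lra. apply HD; lra. }
      { intros; apply HF. }
      rewrite Rmin_left, Rmax_right in Hc1 by lra.
      rewrite Hb in Hc2. replace (b - (b + h)) with (- h) in Hc2 by ring.
      replace ((F (b + h) - 0) / h - 0) with (F1 c) by (rewrite Rminus_0_r;
        replace (F (b + h)) with (F1 c * h) by lra; field; auto).
      rewrite <- (Rminus_0_r (F1 c)), <- H1b. apply Hd. change (Rabs (c - b) < d).
      rewrite Rabs_left1; lra.
    + rewrite cut_out by lra. replace ((0 - 0) / h - 0) with 0 by (field; auto). rewrite Rabs_R0. auto.
  - rewrite cut_out by lra.
    apply (is_derive_ext_loc (fun _ => 0)). 2: apply is_derive_const0.
    destruct (loc_int b (x + 1) x ltac:(lra)) as [e He]. exists e. intros y Hyy.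
    specialize (He y Hyy). rewrite cut_out; lra.
Qed.

Lemma alg_ode n E c s D : n <> 0 -> D ^ 2 = 1 - 1/2 * s ^ 2 -> s ^ 2 = 1 - c ^ 2 ->
  n * (- (AA n * (n - 2) * E + BB n * (n + 2) * (E * c ^ 4)) * s * D) * (E * c ^ 3) ^ 2
  - 3 * n * (AA n * (E * c ^ 1) + BB n * (E * c ^ 5)) * (- n * (E * c ^ 2) * s * D) * (E * c ^ 3)
  + 2 * (n - 1 / n) * (- n * (E * c ^ 2) * s * D) ^ 3 = 0.
Proof.
  intros Hn HD2 Hs.
  assert (H3 : (- n * (E * c ^ 2) * s * D) ^ 3 = - n ^ 3 * E ^ 3 * c ^ 6 * s * D * (s ^ 2 * D ^ 2)) by ring.
  rewrite H3, HD2, Hs. unfold AA, BB. field. auto.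
Qed.

Section Main.
Variable n : R.
Hypothesis hn : 3 < n.

Definition g0 := cut (- Kp) Kp (fun x => G0 n (jm x)).
Definition g1 := cut (- Kp) Kp (fun x => G1 n (jm x)).
Definition g2 := cut (- Kp) Kp (fun x => G2 n (jm x)).
Definition g3 := cut (- Kp) Kp (fun x => G3 n (jm x)).

Lemma Kp_lt : - Kp < Kp.
Proof. pose proof Kp_pos. lra. Qed.

Lemma jm_K_vals : jm Kp = PI/2 /\ jm (- Kp) = - (PI/2).
Proof. split; [apply jm_K | apply jm_mK]. Qed.

Lemma comp_der (G G' : R -> R) x :
  - Kp < x < Kp -> (forall phi, - (PI/2) < phi < PI/2 -> is_derive G phi (G' phi / Dh phi)) ->
  is_derive (fun y => G (jm y)) x (G' (jm x)).
Proof.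
  intros Hx HG. assert (Hj := jm_in x Hx).
  pose proof (is_derive_comp_R G jm x _ _ (HG _ Hj) (jm_derive x)).
  replace (G' (jm x)) with (Dh (jm x) * (G' (jm x) / Dh (jm x))). auto.
  field. apply Rgt_not_eq, Dh_pos.
Qed.

Ltac endv := destruct jm_K_vals as [E1 E2]; rewrite ?E1, ?E2;
  destruct (G_ends n) as [? [? [? [? [? [? [? ?]]]]]]]; auto.

Lemma g0_der x : is_derive g0 x (g1 x).
Proof.
  apply glue. apply Kp_lt.
  intros; apply (cc_comp jm (G0 n)); [apply jm_cont | apply G0_cont; auto].
  intros; apply (cc_comp jm (G1 n)); [apply jm_cont | apply G1_cont; auto].
  all: try endv.
  intros y Hy. apply comp_der; auto. intros; apply G0_der; auto.
Qed.

Lemma g1_der x : is_derive g1 x (g2 x).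
Proof.
  apply glue. apply Kp_lt.
  intros; apply (cc_comp jm (G1 n)); [apply jm_cont | apply G1_cont; auto].
  intros; apply (cc_comp jm (G2 n)); [apply jm_cont | apply G2_cont; auto].
  all: try endv.
  intros y Hy. apply comp_der; auto. intros; apply G1_der; auto.
Qed.

Lemma g2_der x : is_derive g2 x (g3 x).
Proof.
  apply glue. apply Kp_lt.
  intros; apply (cc_comp jm (G2 n)); [apply jm_cont | apply G2_cont; auto].
  intros; apply (cc_comp jm (G3 n)); [apply jm_cont | apply G3_cont; auto].
  all: try endv.
  intros y Hy. apply comp_der; auto. intros; apply G2_der; auto.
Qed.

Lemma g3_cont x : continuity_pt g3 x.
Proof.
  apply cut_cont. apply Kp_lt.
  intros; apply (cc_comp jm (G3 n)); [apply jm_cont | apply G3_cont; auto].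
  all: endv.
Qed.

Lemma g0_cont x : continuity_pt g0 x.
Proof.
  apply cut_cont. apply Kp_lt.
  intros; apply (cc_comp jm (G0 n)); [apply jm_cont | apply G0_cont; auto].
  all: endv.
Qed.

Lemma gfun_eq : gfun n = g0.
Proof.
  apply functional_extensionality. intros x. unfold gfun, g0.
  fold Kp. destruct (Rle_dec (Rabs x) Kp).
  - destruct (Rtotal_order x Kp) as [h|[h|h]]; [destruct (Rtotal_order x (-Kp)) as [h'|[h'|h']]| |].
    + exfalso. rewrite Rabs_left in r by (pose proof Kp_pos; lra). lra.
    + subst x. rewrite cut_out by lra. unfold jcn. fold (jm (-Kp)). rewrite jm_mK.
      rewrite cos_neg, cos_PI2. apply rpow_npos; lra.
    + rewrite cut_in by lra. reflexivity.
    + subst x. rewrite cut_out by lra. unfold jcn. fold (jm Kp). rewrite jm_K.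
      rewrite cos_PI2. apply rpow_npos; lra.
    + exfalso. rewrite Rabs_right in r by (pose proof Kp_pos; lra). lra.
  - rewrite cut_out; auto. unfold Rabs in n0. destruct (Rcase_abs x); lra.
Qed.

Lemma ode_core x : n * g3 x * g0 x ^ 2 - 3 * n * g2 x * g1 x * g0 x + 2 * (n - 1 / n) * g1 x ^ 3 = 0.
Proof.
  unfold g0, g1, g2, g3.
  destruct (Rlt_dec (- Kp) x); [destruct (Rlt_dec x Kp)|].
  - rewrite !cut_in by lra. assert (Hj := jm_in x (conj r r0)).
    assert (Hc := cos_gt_0 _ (proj1 Hj) (proj2 Hj)).
    unfold G0, G1, G2, G3, Pw. rewrite !rpow_pos by auto.
    rewrite (expl (cos (jm x)) (n - 3) n 3) by (auto; simpl; ring).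
    rewrite (expl (cos (jm x)) (n - 3) (n - 1) 2) by (auto; simpl; ring).
    rewrite (expl (cos (jm x)) (n - 3) (n - 2) 1) by (auto; simpl; ring).
    rewrite (expl (cos (jm x)) (n - 3) (n + 2) 5) by (auto; simpl; ring).
    rewrite (expl (cos (jm x)) (n - 3) (n + 1) 4) by (auto; simpl; ring).
    apply alg_ode. lra. apply Dh_sq. apply sin_sq.
  - rewrite !cut_out by lra. ring.
  - rewrite !cut_out by lra. ring.
Qed.

End Main.

Lemma Der_eq (f f1 : R -> R) : (forall x, is_derive f x (f1 x)) -> Derive f = f1.
Proof. intros H. apply functional_extensionality. intros x. apply is_derive_unique, H. Qed.

Lemma der_scal (f : R -> R) x l c : is_derive f x l -> is_derive (fun y => c * f y) x (c * l).
Proof. intros H. apply is_derive_Reals in H. apply is_derive_Reals.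
  apply (derivable_pt_lim_scal f c x l H). Qed.

Lemma der_lin (f : R -> R) x l c d : is_derive f x l -> is_derive (fun y => c * f y + d) x (c * l).
Proof. intros H. apply is_derive_Reals in H. apply is_derive_Reals.
  replace (c * l) with (c * l + 0) by ring.
  apply (derivable_pt_lim_plus (mult_real_fct c f) (fun _ => d)).
  apply (derivable_pt_lim_scal f c x l H). apply derivable_pt_lim_const. Qed.

Lemma der_scomp c a b (h h' : R -> R) x : is_derive h (a * x + b) (h' (a * x + b)) ->
  is_derive (fun y => c * h (a * y + b)) x ((c * a) * h' (a * x + b)).
Proof. intros H.
  assert (H2 : is_derive (fun y => a * y + b) x a) by (auto_derive; auto; ring).
  pose proof (is_derive_comp_R h (fun y => a * y + b) x _ _ H H2).
  rewrite Rmult_assoc. apply (der_scal (fun y => h (a * y + b))). auto. Qed.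

Lemma Der_scomp c a b (h h' : R -> R) : (forall y, is_derive h y (h' y)) ->
  Derive (fun x => c * h (a * x + b)) = fun x => (c * a) * h' (a * x + b).
Proof. intros H. apply Der_eq. intros x. apply der_scomp, H. Qed.

Lemma lin_cont a b x : continuity_pt (fun y => a * y + b) x.
Proof. assert (H2 : is_derive (fun y => a * y + b) x a) by (auto_derive; auto; ring).
  apply continuity_pt_filterlim. exact (cont_of_derive _ x a H2). Qed.

Lemma scomp_cont c a b (h : R -> R) x : (forall y, continuity_pt h y) ->
  continuity_pt (fun y => c * h (a * y + b)) x.
Proof. intros H. apply cc_mult. apply cc_const.
  apply (cc_comp (fun y => a * y + b) h). apply lin_cont. apply H. Qed.

Theorem mainTheorem2 (n : R) (hn : 3 < n) :
  Ck 3 (gfun n) /\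
  (forall x : R,
     n * Derive_n (gfun n) 3 x * (gfun n x) ^ 2
     - 3 * n * Derive_n (gfun n) 2 x * Derive_n (gfun n) 1 x * gfun n x
     + 2 * (n - 1 / n) * (Derive_n (gfun n) 1 x) ^ 3 = 0) /\
  (forall alpha beta gamma delta : R, alpha <> 0 ->
     let Y := fun x : R =>
       gamma * RInt_gen (fun t => gfun n (alpha * t + beta))
                 (Rbar_locally m_infty) (at_point x) + delta in
     Ck 4 Y /\
     forall x : R,
       Derive_n Y 4 x * (Derive_n Y 1 x) ^ 2
       - 3 * Derive_n Y 3 x * Derive_n Y 2 x * Derive_n Y 1 x
       + 2 * (1 - / n ^ 2) * (Derive_n Y 2 x) ^ 3 = 0).
Proof.
  assert (E1 : Derive (g0 n) = g1 n) by (apply Der_eq; apply g0_der; auto).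
  assert (E2 : Derive (g1 n) = g2 n) by (apply Der_eq; apply g1_der; auto).
  assert (E3 : Derive (g2 n) = g3 n) by (apply Der_eq; apply g2_der; auto).
  rewrite (gfun_eq n).
  split; [|split].
  - split.
    + intros j Hj x. destruct j as [|[|[|[|j]]]]; try (exfalso; lia).
      * exact I.
      * exists (g1 n x). apply g0_der; auto.
      * change (ex_derive (Derive (g0 n)) x). rewrite E1. exists (g2 n x). apply g1_der; auto.
      * change (ex_derive (Derive (Derive (g0 n))) x). rewrite E1, E2. exists (g3 n x). apply g2_der; auto.
    + intros x. change (continuous (Derive (Derive (Derive (g0 n)))) x). rewrite E1, E2, E3.
      apply continuity_pt_filterlim. apply g3_cont; auto.
  - intros x. change (n * Derive (Derive (Derive (g0 n))) x * g0 n x ^ 2 -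
      3 * n * Derive (Derive (g0 n)) x * Derive (g0 n) x * g0 n x +
      2 * (n - 1 / n) * Derive (g0 n) x ^ 3 = 0).
    rewrite E1, E2, E3. apply ode_core. lra.
  - intros alpha beta gamma delta Ha Y.
    set (ft := fun t => g0 n (alpha * t + beta)) in *.
    set (t0 := - ((Kp + Rabs beta) / Rabs alpha) - 1).
    assert (Hft : forall z, continuity_pt ft z).
    { intros z. unfold ft. apply (cc_comp (fun y => alpha*y+beta) (g0 n)). apply lin_cont. apply g0_cont; auto. }
    assert (Hex : forall a b, ex_RInt ft a b).
    { intros a b. apply (ex_RInt_continuous (V:=R_CompleteNormedModule)). intros z _. apply continuity_pt_filterlim, Hft. }
    assert (Hz : forall t, t < t0 -> ft t = 0).
    { intros t Ht. unfold ft, g0. apply cut_out. pose proof Kp_pos.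
      assert (Hal : 0 < Rabs alpha) by (apply Rabs_pos_lt; auto).
      pose proof (Rabs_pos beta). pose proof (Rle_abs beta). pose proof (Rabs_maj2 beta).
      assert (Hq : 0 <= (Kp + Rabs beta) / Rabs alpha) by (apply Rdiv_le_0_compat; lra).
      assert (Hm : Rabs alpha * (- t) > Kp + Rabs beta).
      { assert (- t > (Kp + Rabs beta) / Rabs alpha + 1) by (unfold t0 in Ht; lra).
        apply Rmult_gt_compat_l with (r := Rabs alpha) in H3; auto.
        replace (Rabs alpha * ((Kp + Rabs beta) / Rabs alpha + 1)) with (Kp + Rabs beta + Rabs alpha) in H3
          by (field; lra). lra. }
      unfold Rabs in Hm at 1. destruct (Rcase_abs alpha); [right | left]; nra. }
    assert (HI : forall x, RInt_gen ft (Rbar_locally m_infty) (at_point x) = RInt ft t0 x).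
    { intros x. apply is_RInt_gen_unique. unfold is_RInt_gen.
      apply (filterlimi_lim_ext_loc (fun _ => RInt ft t0 x)).
      2: apply filterlim_const.
      apply (Filter_prod _ _ _ (fun a => a < t0) (fun b => b = x)).
      - exists t0; auto.
      - reflexivity.
      - intros a b Ha' Hb. simpl. subst b.
        replace (RInt ft t0 x) with (RInt ft a x).
        apply (RInt_correct (V:=R_CompleteNormedModule)), Hex.
        rewrite <- (RInt_Chasles (V:=R_CompleteNormedModule) ft a t0 x) by auto.
        rewrite (RInt_ext (V:=R_CompleteNormedModule) ft (fun _ => 0) a t0).
        + rewrite RInt_const. change ((t0 - a) * 0 + RInt ft t0 x = RInt ft t0 x). ring.
        + intros z Hz'. rewrite Rmax_right in Hz' by lra. apply Hz; lra. }
    assert (HY : Y = fun x => gamma * RInt ft t0 x + delta).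
    { apply functional_extensionality. intros x. unfold Y. rewrite HI. reflexivity. }
    clearbody Y. subst Y.
    assert (HdY : forall x, is_derive (fun x => gamma * RInt ft t0 x + delta) x (gamma * g0 n (alpha * x + beta))).
    { intros x. apply der_lin. change (is_derive (fun x0 => RInt ft t0 x0) x (ft x)).
      apply (is_derive_RInt (V:=R_NormedModule) ft (fun b => RInt ft t0 b) t0 x).
      exists (mkposreal 1 Rlt_0_1). intros y _. apply (RInt_correct (V:=R_CompleteNormedModule)), Hex.
      apply continuity_pt_filterlim, Hft. }
    assert (D1 := Der_eq _ _ HdY).
    assert (D2 := Der_scomp gamma alpha beta (g0 n) (g1 n) (g0_der n hn)).
    assert (D3 := Der_scomp (gamma * alpha) alpha beta (g1 n) (g2 n) (g1_der n hn)).
    assert (D4 := Der_scomp (gamma * alpha * alpha) alpha beta (g2 n) (g3 n) (g2_der n hn)).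
    set (Y := fun x => gamma * RInt ft t0 x + delta) in *.
    assert (D1' : Derive Y = fun x => gamma * g0 n (alpha * x + beta)) by exact D1.
    assert (HdY' : forall x, is_derive Y x (gamma * g0 n (alpha * x + beta))) by exact HdY.
    clear D1 HdY. rename D1' into D1. rename HdY' into HdY.
    split.
    + split.
      * intros j Hj x. destruct j as [|[|[|[|[|j]]]]]; try (exfalso; lia).
        -- exact I.
        -- change (ex_derive Y x). eexists. apply HdY.
        -- change (ex_derive (Derive Y) x). rewrite D1. eexists. apply der_scomp, g0_der; auto.
        -- change (ex_derive (Derive (Derive Y)) x). rewrite D1, D2. eexists. apply der_scomp, g1_der; auto.
        -- change (ex_derive (Derive (Derive (Derive Y))) x). rewrite D1, D2, D3. eexists. apply der_scomp, g2_der; auto.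
      * intros x. change (continuous (Derive (Derive (Derive (Derive Y)))) x).
        rewrite D1, D2, D3, D4. apply continuity_pt_filterlim. apply scomp_cont.
        intros; apply g3_cont; auto.
    + intros x. change (Derive (Derive (Derive (Derive Y))) x * Derive Y x ^ 2 -
        3 * Derive (Derive (Derive Y)) x * Derive (Derive Y) x * Derive Y x +
        2 * (1 - / n ^ 2) * Derive (Derive Y) x ^ 3 = 0).
      rewrite D1, D2, D3, D4. cbv beta.
      assert (H := ode_core n hn (alpha * x + beta)).
      set (z := alpha * x + beta) in *.
      set (a0 := g0 n z) in *. set (a1 := g1 n z) in *. set (a2 := g2 n z) in *. set (a3 := g3 n z) in *.
      replace (gamma * alpha * alpha * alpha * a3 * (gamma * a0) ^ 2 -
        3 * (gamma * alpha * alpha * a2) * (gamma * alpha * a1) * (gamma * a0) +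
        2 * (1 - / n ^ 2) * (gamma * alpha * a1) ^ 3) with
        (gamma ^ 3 * alpha ^ 3 / n * (n * a3 * a0 ^ 2 - 3 * n * a2 * a1 * a0 + 2 * (n - 1 / n) * a1 ^ 3))
        by (field; lra).
      rewrite H. ring.
Qed.
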